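(* ($I\Sigma_1$) If $X\subseteq\mathbb{N}$ is finite, $\omega^3$-large, and $\min X>3$, then $X$ is $\mathsf{fEM}_{<\infty}$-$\omega$-large.
   Context: $\alpha$-largeness for $\alpha<\omega^\omega$: writing ordinals in Cantor normal form, $0[m]=0$, $(\beta+1)[m]=\beta$, $(\beta+\omega^n)[m]=\beta+\omega^{n-1}\cdot m$ for $n\ge1$; a finite $\{x_0<\dots<x_{\ell-1}\}$ is $\alpha$-large if $\alpha[x_0]\cdots[x_{\ell-1}]=0$. A finite set $X$ is \emph{$\mathsf{fEM}_{<\infty}$-$\alpha$-large} if for every coloring $P:[X]^2\to\{0,\dots,\min X-1\}$ there is $Y\subseteq X$ which is $\alpha$-large and such that $P$ is fallow on $[Y]^2$, i.e. $P(x,z)\in\{P(x,y),P(y,z)\}$ for all $x<y<z$ in $Y$. *)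

(* Defs.v *)
From mathcomp Require Import all_boot.
Set Implicit Arguments. Unset Strict Implicit. Unset Printing Implicit Defensive.

(* Ordinals below omega^omega in Cantor normal form:
   the list [:: e1; ...; ek] (e1 >= ... >= ek) denotes
   omega^e1 + ... + omega^ek; the empty list denotes 0. *)
Definition cnf := seq nat.

(* Fundamental sequence: 0[m] = 0, (b+1)[m] = b,
   (b + omega^n)[m] = b + omega^(n-1) * m  for n >= 1. *)
Definition fund (a : cnf) (m : nat) : cnf :=
  match a with
  | [::] => [::]
  | e0 :: a' =>
      let b := belast e0 a' in
      let n := last e0 a' in
      if n is n'.+1 then b ++ nseq m n' else b
  end.

(* A finite set {x0 < ... < x_{l-1}} is given as its increasing enumeration s.
   It is a-large iff a[x0]...[x_{l-1}] = 0. *)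
Definition large (a : cnf) (s : seq nat) : bool :=
  foldl fund a s == [::].

Definition omega : cnf := [:: 1].
Definition omega_pow (n : nat) : cnf := [:: n].

Definition fallow (P : nat -> nat -> nat) (Y : seq nat) : Prop :=
  forall x y z, x \in Y -> y \in Y -> z \in Y -> x < y -> y < z ->
    P x z = P x y \/ P x z = P y z.

Definition fEM_large (a : cnf) (X : seq nat) : Prop :=
  forall P : nat -> nat -> nat,
    (forall x y, x \in X -> y \in X -> x < y -> P x y < head 0 X) ->
    exists Y : seq nat, [/\ subseq Y X, large a Y & fallow P Y].

(* Main.v *)
Require Import Defs.
From mathcomp Require Import all_boot.
From mathcomp Require Import zify.
Set Implicit Arguments. Unset Strict Implicit.

Definition enc a b c : cnf := nseq a 2 ++ nseq b 1 ++ nseq c 0.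

Lemma fund_rcons l e m : fund (rcons l e) m = if e is e'.+1 then l ++ nseq m e' else l.
Proof. by case: l => [|e0 l] //=; rewrite belast_rcons last_rcons. Qed.

Lemma nseqSr (c x : nat) : nseq c.+1 x = rcons (nseq c x) x.
Proof. by elim: c => //= c ->. Qed.

Lemma fund_encC a b c m : fund (enc a b c.+1) m = enc a b c.
Proof. by rewrite /enc nseqSr -!rcons_cat fund_rcons. Qed.

Lemma fund_encB a b m : fund (enc a b.+1 0) m = enc a b m.
Proof. by rewrite /enc nseqSr /= cats0 -rcons_cat fund_rcons catA. Qed.

Lemma fund_encA a m : fund (enc a.+1 0 0) m = enc a m 0.
Proof. by rewrite /enc nseqSr /= !cats0 fund_rcons. Qed.

Lemma enc_nil a b c : enc a b c = [::] -> [/\ a = 0, b = 0 & c = 0].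
Proof. move/(congr1 size); rewrite /enc !size_cat !size_nseq /= => h; split; lia. Qed.

Fixpoint D b m := if b is b'.+1 then m + D b' (2 * m + 1) else 0.
Fixpoint G a m := if a is a'.+1 then D m m + G a' (m + D m m) else 0.

Lemma D_monoM b m1 m2 : m1 <= m2 -> D b m1 <= D b m2.
Proof.
elim: b m1 m2 => //= b IH m1 m2 h.
have := IH (2 * m1 + 1) (2 * m2 + 1); lia.
Qed.

Lemma D_monoB b m : D b m <= D b.+1 m.
Proof. rewrite /=; have : m <= 2 * m + 1 by lia. move/(D_monoM b); lia. Qed.

Lemma D_mono b1 b2 m1 m2 : b1 <= b2 -> m1 <= m2 -> D b1 m1 <= D b2 m2.
Proof.
move=> hb hm; apply: (leq_trans (D_monoM b1 hm)).
elim: b2 hb => [|b2 IH]; first by rewrite leqn0 => /eqP->.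
rewrite leq_eqVlt => /orP[/eqP->//|h]. exact: leq_trans (IH h) (D_monoB _ _).
Qed.

Lemma G_monoM a m1 m2 : m1 <= m2 -> G a m1 <= G a m2.
Proof.
elim: a m1 m2 => //= a IH m1 m2 h.
have h1 := D_mono h h.
have := IH (m1 + D m1 m1) (m2 + D m2 m2); lia.
Qed.

Definition Phi a b c m := c + D b (m + c) + G a (m + c + D b (m + c)).

Lemma bound s : forall a b c m, sorted ltn s -> all (leq m) s ->
  foldl fund (enc a b c) s = [::] -> Phi a b c m <= size s.
Proof.
elim: s => [|x s IH] a b c m /=.
  by move=> _ _ /enc_nil [-> -> ->].
move=> Hs /andP[Hmx _] Hf.
have Hs' : sorted ltn s := path_sorted Hs.
have Hall : all (leq x.+1) s := order_path_min ltn_trans Hs.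
case: c Hf => [|c] Hf.
  case: b Hf => [|b] Hf.
    case: a Hf => [|a] Hf.
      by rewrite /Phi.
    rewrite fund_encA in Hf.
    have := IH _ _ _ _ Hs' Hall Hf; rewrite /Phi /= !addn0.
    have h1 : D m m <= D x x.+1 by apply: D_mono => //; lia.
    have h2 := G_monoM a (_ : m + D m m <= x.+1 + D x x.+1).
    have := h2 ltac:(lia). lia.
  rewrite fund_encB in Hf.
  have := IH _ _ _ _ Hs' Hall Hf; rewrite /Phi /= !addn0.
  have h1 : D b (2 * m + 1) <= D b (x.+1 + x) by apply: D_monoM; lia.
  have h2 := G_monoM a (_ : m + (m + D b (2 * m + 1)) <= x.+1 + x + D b (x.+1 + x)).
  have := h2 ltac:(lia). lia.
rewrite fund_encC in Hf.
have := IH _ _ _ _ Hs' Hall Hf; rewrite /Phi.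
have h1 : D b (m + c.+1) <= D b (x.+1 + c) by apply: D_monoM; lia.
have h2 := G_monoM a (_ : m + c.+1 + D b (m + c.+1) <= x.+1 + c + D b (x.+1 + c)).
have := h2 ltac:(lia). lia.
Qed.

Lemma Dlow b m : m * 2 ^ b <= D b m + m.
Proof.
elim: b m => [|b IH] m /=; first by rewrite muln1.
have := IH (2 * m + 1); have := expn_gt0 2 b; rewrite expnS /=.
move: (D b _) (2 ^ b) => d p. nia.
Qed.

Lemma G2 a M : D (M + D M M) (M + D M M) <= G a.+2 M.
Proof. rewrite [G a.+2 M]/=. by rewrite addnCA leq_addr. Qed.

Lemma numeric M M' X k : 1 < M -> M * 2 ^ M <= M' -> 2 ^ M' <= X + 1 -> X <= k -> M ^ M <= k + 1.
Proof.
move=> h1 hM h2 hk.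
have e2 : M ^ M <= (2 ^ M) ^ M.
  rewrite leq_exp2r; last by apply: ltnW.
  by apply: ltnW; apply: ltn_expl.
have e3 : 2 ^ (M * M) <= 2 ^ M'.
  apply: leq_pexp2l => //; apply: leq_trans hM; rewrite leq_mul2l. 
  apply/orP; right; apply: ltnW; apply: ltn_expl. done.
rewrite -expnM in e2.
set p := M ^ M in e2 *; set q := 2 ^ (M * M) in e2 e3; set r := 2 ^ M' in e3 h2.
exact: leq_trans e2 (leq_trans e3 (leq_trans h2 (leq_add hk (leqnn 1)))).
Qed.

Lemma low2 M : 0 < M -> 2 ^ M <= D M M + 1.
Proof.
move=> h; have := Dlow M M. move: (D M M) (2 ^ M) => d p. nia.
Qed.

Lemma sizebound n k : 3 < n -> G n n.+1 <= k -> n.+1 ^ n <= k + 1.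
Proof.
move=> h3 hk.
have [a ea] : exists a, n = a.+2 by exists n.-2; lia.
have e1 : n.+1 ^ n <= n.+1 ^ n.+1 by apply: leq_pexp2l.
suff : n.+1 ^ n.+1 <= k + 1 by move=> h; exact: leq_trans e1 h.
have hG := G2 a n.+1. rewrite -ea in hG.
set M' := n.+1 + D n.+1 n.+1 in hG.
apply: (@numeric n.+1 M' (D M' M')).
- by rewrite ltnS; apply: leq_trans h3.
- rewrite /M' addnC; apply: Dlow.
- by apply: low2; rewrite /M' addSn.
- exact: leq_trans hG hk.
Qed.

Lemma fold_zeros r c : foldl fund (enc 0 0 c) r = enc 0 0 (c - size r).
Proof.
elim: r c => [|x r IH] c /=; first by rewrite subn0.
case: c => [|c]; first by have -> : fund (enc 0 0 0) x = enc 0 0 0 by []; rewrite IH.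
by rewrite fund_encC IH subSS.
Qed.

Lemma large_omega y r : y <= size r -> large omega (y :: r).
Proof.
move=> h; rewrite /large /=.
have -> : nseq y 0 = enc 0 0 y by [].
rewrite fold_zeros; have -> : y - size r = 0 by apply/eqP; rewrite subn_eq0.
by [].
Qed.

Lemma ph (f : nat -> nat) K T n :
  (forall c, c < n -> count (fun y => f y == c) T <= K) ->
  count (fun y => f y < n) T <= n * K.
Proof.
elim: n => [|n IH] h.
  by rewrite (eq_count (a2 := pred0)) ?count_pred0.
have e : count (fun y => f y < n.+1) T =
         count (fun y => f y < n) T + count (fun y => f y == n) T.
  rewrite -count_predUI (eq_count (a1 := predI _ _) (a2 := pred0)); last first.
    by move=> y /=; case: ltngtP.
  rewrite count_pred0 addn0; apply: eq_count => y /=.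
  by rewrite ltnS leq_eqVlt orbC.
rewrite e mulSn addnC; apply: leq_add; first exact: h.
by apply: IH => c hc; apply: h; apply: ltnW.
Qed.

Definition homog (P : nat -> nat -> nat) (Y : seq nat) : Prop :=
  forall x y z, x \in Y -> y \in Y -> z \in Y -> x < y -> y < z -> P x z = P x y.

Lemma greedy n (P : nat -> nat -> nat) k : 0 < n -> forall S, sorted ltn S ->
  (forall x y, x \in S -> y \in S -> x < y -> P x y < n) -> n.+1 ^ k <= size S ->
  exists Y, [/\ subseq Y S, head 0 Y = head 0 S, k < size Y & homog P Y].
Proof.
move=> n0; elim: k => [|k IH] [|x T] //= Hs Hc Hsz.
- exists [:: x]; split => //; first by rewrite eqxx sub0seq.
  by move=> a b c; rewrite !inE => /eqP-> /eqP-> /eqP->; rewrite ltnn.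
- by move: Hsz; rewrite leqn0 expn_eq0.
- have HxT : all (ltn x) T := order_path_min ltn_trans Hs.
  have HsT : sorted ltn T := path_sorted Hs.
  pose f := fun y => P x y.
  have [c hc hcnt] : exists2 c, c < n & n.+1 ^ k <= count (fun y => f y == c) T.
    case/boolP: (has (fun c => n.+1 ^ k <= count (fun y => f y == c) T) (iota 0 n)).
      by case/hasP => c; rewrite mem_iota add0n => /andP[_ hc] h; exists c.
    move/hasPn => hn.
    have hall : count (fun y => f y < n) T = size T.
      apply/eqP; rewrite -all_count; apply/allP => y hy.
      apply: Hc; rewrite ?inE ?eqxx ?hy ?orbT //.
      exact: (allP HxT).
    have := @ph f (n.+1 ^ k).-1 T n.
    rewrite hall.
    have h1 : forall c, c < n -> count (fun y => f y == c) T <= (n.+1 ^ k).-1.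
      move=> c hc; have := hn c; rewrite mem_iota add0n hc => /(_ isT).
      rewrite -ltnNge; have := expn_gt0 n.+1 k; lia.
    move=> /(_ h1) hT; exfalso; move: Hsz hT; rewrite expnS.
    have := expn_gt0 n.+1 k; move: (n.+1 ^ k) => p; nia.
  pose T' := filter (fun y => f y == c) T.
  have [Y' [sY' hY' szY' hoY']] : exists Y, [/\ subseq Y T', head 0 Y = head 0 T', k < size Y & homog P Y].
    apply: IH.
    - exact: sorted_filter ltn_trans _ _ HsT.
    - move=> a b; rewrite !mem_filter => /andP[_ ha] /andP[_ hb]; apply: Hc; by rewrite inE ?ha ?hb orbT.
    - by rewrite size_filter.
  have sT : subseq Y' T := subseq_trans sY' (filter_subseq _ _).
  exists (x :: Y'); split => //=.
  + by rewrite eqxx.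
  + have memY : forall y, y \in Y' -> x < y /\ P x y == c.
      move=> y hy; split; first exact: (allP HxT) _ (mem_subseq sT hy).
      by move: (mem_subseq sY' hy); rewrite mem_filter => /andP[].
    move=> a b d; rewrite !inE => ha hb hd hab hbd.
    case/orP: ha => [/eqP ea | ha].
    * subst a.
      have hb' : b \in Y' by case/orP: hb => // /eqP eb; move: hab; rewrite eb ltnn.
      have hd' : d \in Y' by case/orP: hd => // /eqP ed; move: (ltn_trans hab hbd); rewrite ed ltnn.
      by move: (memY _ hb') (memY _ hd') => [_ /eqP <-] [_ /eqP <-].
    * have [hxa _] := memY _ ha.
      have hb' : b \in Y' by case/orP: hb => // /eqP eb; move: (ltn_trans hxa hab); rewrite eb ltnn.
      have hd' : d \in Y'.
        by case/orP: hd => // /eqP ed; move: (ltn_trans hxa (ltn_trans hab hbd)); rewrite ed ltnn.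
      exact: hoY'.
Qed.

Theorem mainTheorem14 (X : seq nat) :
  sorted ltn X -> large (omega_pow 3) X -> 3 < head 0 X -> fEM_large omega X.
Proof.
case: X => [|x0 s] //= Hs HL h3.
have HsT : sorted ltn s := path_sorted Hs.
have Hall : all (leq x0.+1) s := order_path_min ltn_trans Hs.
have Hf : foldl fund (enc x0 0 0) s = [::].
  apply/eqP; move: HL; rewrite /large /=.
  by have -> : enc x0 0 0 = nseq x0 2 by rewrite /enc /= cats0.
have hb := bound HsT Hall Hf.
rewrite /Phi /= !addn0 in hb.
have hsz := sizebound h3 hb.
move=> P HP.
have n0 : 0 < x0 := ltn_trans (isT : 0 < 3) h3.
have hsz2 : x0.+1 ^ x0 <= size (x0 :: s) by rewrite addn1 in hsz.
have [Y [sY hY szY hoY]] := @greedy x0 P x0 n0 (x0 :: s) Hs HP hsz2.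
exists Y; split => //.
- case: Y sY hY szY hoY => [|y r] //= _ -> szY _.
  by apply: large_omega.
- by move=> a b c ha hb' hc hab hbc; left; apply: hoY.
Qed.
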